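(* Let $k\ge1$ and $[k+]=\{1,2,\ldots,k\}$. For every set $A$ with $\emptyset\neq A\subsetneq[k+]$ we have $d([k+])\ge d(A)$, and the inequality is strict for $k\neq3$.
   Context: For $A,B\subseteq\mathbb{N}=\{0,1,\ldots\}$, $A+B=\{a+b:a\in A,b\in B\}$. For a nonempty finite $C\subseteq\mathbb{N}$, $d(C)$ is the number of sets $B\subseteq\mathbb{N}$ such that $B+D=C$ for some $D\subseteq\mathbb{N}$. *)

(* Defs.v *)
From mathcomp Require Import all_boot all_order.
From mathcomp Require Import finmap.
Set Implicit Arguments. Unset Strict Implicit. Unset Printing Implicit Defensive.
Local Open Scope fset_scope.

Definition sumset (A B : {fset nat}) : {fset nat} :=
  [fset (a + b)%N | a in A, b in B].

(* Any B, D ⊆ ℕ with B + D = C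
   (C finite nonempty) are nonempty and contained in this segment, hence
   finite subsets of it; so this bounded search counts all such B. *)
Definition upto (C : {fset nat}) : {fset nat} :=
  [fset i | i in iota 0 (\max_(c <- C) c).+1].

Definition d (C : {fset nat}) : nat :=
  #|` [fset B in fpowerset (upto C) |
        has (fun D => sumset B D == C) (fpowerset (upto C))] |.

Definition kplus (k : nat) : {fset nat} := [fset i | i in iota 1 k].

(* Main.v *)
Require Import Defs.
From mathcomp Require Import all_boot all_order.
From mathcomp Require Import finmap.
From mathcomp Require Import zify.
Set Implicit Arguments. Unset Strict Implicit. Unset Printing Implicit Defensive.
Local Open Scope fset_scope.

Definition maxf (B : {fset nat}) : nat := \max_(c <- B) c.
Definition fI (N : nat) : {fset nat} := [fset i | i in iota 0 N.+1].
Definition cov (B : {fset nat}) (L N : nat) : bool :=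
  all (fun x => has (fun y => (y <= x) && (x <= y + L)) B) (iota 0 N.+1).
Definition T (N : nat) : {fset {fset nat}} :=
  [fset B in fpowerset (fI N) | (0 \in B) && cov B (N - maxf B) N].

Lemma in_iotaf m n x : (x \in [fset i | i in iota m n]) = (m <= x < m + n)%N.
Proof. by rewrite in_fset /= mem_iota. Qed.

Lemma in_fI N x : (x \in fI N) = (x <= N)%N.
Proof. by rewrite /fI in_iotaf. Qed.

Lemma maxf_ge (B : {fset nat}) (x : nat) : x \in B -> (x <= maxf B)%N.
Proof. move=> H; rewrite /maxf. apply: leq_bigmax_seq => //. Qed.

Lemma maxf_le (B : {fset nat}) (m : nat) : (forall x, x \in B -> x <= m)%N -> (maxf B <= m)%N.
Proof. by move=> H; apply/bigmax_leqP_seq => i Hi _; apply: H. Qed.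

Lemma maxf_eq (B : {fset nat}) (c : nat) : c \in B -> (forall x, x \in B -> x <= c)%N -> maxf B = c.
Proof.
move=> Hc H; apply/eqP; rewrite eqn_leq maxf_le //= maxf_ge //.
Qed.

Lemma covP (B : {fset nat}) (L N : nat) :
  reflect (forall x, x <= N -> exists y, [/\ y \in B, y <= x & x <= y + L])%N
          (cov B L N).
Proof.
apply: (iffP allP) => H.
- move=> x Hx; have /H/hasP [y Hy /andP [H1 H2]] : x \in iota 0 N.+1.
    by rewrite mem_iota.
  by exists y.
- move=> x; rewrite mem_iota => /andP [_ Hx].
  have [y [Hy H1 H2]] := H x Hx.
  by apply/hasP; exists y => //; rewrite H1 H2.
Qed.

Lemma inT N (B : {fset nat}) : B \in T N <->
  [/\ (forall x, x \in B -> x <= N)%N, 0 \in B &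
      (forall x, x <= N -> exists y, [/\ y \in B, y <= x & x <= y + (N - maxf B)])%N].
Proof.
rewrite !inE fpowersetE; split.
- move=> /andP [/fsubsetP Hs /andP [H0 /covP Hc]]; split => //.
  by move=> x /Hs; rewrite in_fI.
- move=> [Hs H0 Hc]; rewrite H0 /=; apply/andP; split; last exact/covP.
  by apply/fsubsetP => x /Hs; rewrite in_fI.
Qed.

Lemma card_inj (T1 T2 : choiceType) (S : {fset T1}) (G : {fset T2}) (f : T1 -> T2) :
  (forall x, x \in S -> f x \in G) -> {in S &, injective f} ->
  (#|` S| <= #|` G|)%N.
Proof.
move=> HG Hi; have <- : #|` f @` S| = #|` S| by apply/eqP/card_in_imfsetP.
apply: fsubset_leq_card; apply/fsubsetP => y /imfsetP [x Hx ->]; exact: HG.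
Qed.

Lemma in_sep (K : choiceType) (A : {fset K}) (P : pred K) x :
  (x \in [fset y in A | P y]) = (x \in A) && P x.
Proof. by rewrite !inE. Qed.

Lemma maxf_in (B : {fset nat}) (x : nat) : x \in B -> maxf B \in B.
Proof.
move=> Hx.
have : (maxf B == 0) || (maxf B \in B).
  rewrite /maxf big_seq; apply: (big_ind (fun m => (m == 0) || (m \in B))) => //.
  - move=> a b Ha Hb; rewrite /maxn; case: ltnP => _ //.
  - by move=> i ->; rewrite orbT.
case/orP => // H1; have H : maxf B = 0 by apply/eqP. have := maxf_ge Hx; rewrite H leqn0 => /eqP Hx0.
by rewrite -Hx0.
Qed.

Definition sh (C : {fset nat}) : {fset nat} := [fset x.+1 | x in C].
Definition sigma (C : {fset nat}) : {fset nat} := 0 |` sh C.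

Lemma in_sh (C : {fset nat}) (x : nat) : (x.+1 \in sh C) = (x \in C).
Proof. by rewrite /sh mem_imfset //; move=> a b []. Qed.

Lemma in_sh0 (C : {fset nat}) : (0 \in sh C) = false.
Proof. by apply/negP => /imfsetP [y _]. Qed.

Lemma in_shP (C : {fset nat}) (x : nat) : x \in sh C -> exists2 y, y \in C & x = y.+1.
Proof. by move/imfsetP. Qed.

Lemma in_sigma (C : {fset nat}) (x : nat) : (x.+1 \in sigma C) = (x \in C).
Proof. by rewrite /sigma in_fset1U in_sh. Qed.

Lemma sigma_inj : injective sigma.
Proof. by move=> C C' H; apply/fsetP => x; rewrite -[x \in C]in_sigma -[x \in C']in_sigma H. Qed.

Lemma maxf_sigma (C : {fset nat}) : 0 \in C -> maxf (sigma C) = (maxf C).+1.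
Proof.
move=> H0; apply: maxf_eq; first by rewrite in_sigma (maxf_in H0).
move=> x; rewrite /sigma in_fset1U => /orP [/eqP -> //|/in_shP [y Hy ->]].
by rewrite ltnS maxf_ge.
Qed.

Lemma sigma_T n (C : {fset nat}) : C \in T n -> sigma C \in T n.+1.
Proof.
move=> /inT [Hs H0 Hc]; apply/inT; split.
- move=> x; rewrite /sigma in_fset1U => /orP [/eqP -> //|/in_shP [y Hy ->]].
  by rewrite ltnS Hs.
- by rewrite /sigma fset1U1.
- rewrite maxf_sigma // subSS => -[|x] Hx.
  + by exists 0; rewrite /sigma fset1U1.
  + have [y [Hy H1 H2]] := Hc x Hx.
    exists y.+1; split => //; rewrite ?in_sigma //; lia.
Qed.

Lemma T_mono n : T n `<=` T n.+1.
Proof.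
apply/fsubsetP => C /inT [Hs H0 Hc]; apply/inT; split => //.
- by move=> x /Hs; lia.
- have Hm : maxf C <= n by apply: maxf_le.
  move=> x Hx; case: (leqP x n) => Hxn.
  + have [y [Hy H1 H2]] := Hc x Hxn; exists y; split => //; lia.
  + exists (maxf C); split; first exact: maxf_in H0.
    * lia.
    * lia.
Qed.

Lemma T0 n : [fset 0] \in T n.
Proof.
have Hm : maxf [fset 0] = 0 by apply: maxf_eq; rewrite ?in_fset1 // => x; rewrite in_fset1 => /eqP ->.
apply/inT; split.
- by move=> x; rewrite in_fset1 => /eqP ->.
- by rewrite in_fset1.
- move=> x Hx; exists 0; split; rewrite ?in_fset1 //; lia.
Qed.

Definition t n := #|` T n|.
Definition U n := [fset C in T n.+1 | 1 \notin C].
Definition Q1 n := [fset C in T n | 1 \notin C].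
Definition Q2 n := [fset C in T n | (1 \in C) && (C != fI n)].
Definition h2 (C : {fset nat}) : {fset nat} := 0 |` [fset x.+1 | x in [fset y in C | y != 0]].

Lemma inU n C : (C \in U n) = (C \in T n.+1) && (1 \notin C).
Proof. by rewrite /U in_sep. Qed.
Lemma inQ1 n C : (C \in Q1 n) = (C \in T n) && (1 \notin C).
Proof. by rewrite /Q1 in_sep. Qed.
Lemma inQ2 n C : (C \in Q2 n) = (C \in T n) && ((1 \in C) && (C != fI n)).
Proof. by rewrite /Q2 in_sep. Qed.

Lemma step1 n : t n + #|` U n| <= t n.+1.
Proof.
have Hd : (sigma @` T n) `&` U n = fset0.
  apply/fsetP => C; rewrite in_fsetI in_fset0; apply/negP => /andP [/imfsetP [D HD ->]].
  have [_ H0 _] := (inT n D).1 HD.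
  by rewrite in_sep /sigma in_fset1U (in_sh D 0) H0 /= andbF.
have Hc : #|` sigma @` T n| = t n.
  by apply/eqP/card_in_imfsetP => x y _ _; apply: sigma_inj.
have := cardfsUI (sigma @` T n) (U n); rewrite Hd cardfs0 addn0 Hc => <-.
apply: fsubset_leq_card; apply/fsubsetP => C; rewrite in_fsetU => /orP [/imfsetP [D HD ->]|].
- exact: sigma_T.
- by rewrite in_sep => /andP [H _].
Qed.

Lemma Q1U n : #|` Q1 n| <= #|` U n|.
Proof.
apply: fsubset_leq_card; apply/fsubsetP => C; rewrite in_sep => /andP [H H1].
by rewrite in_sep H1 andbT; move: H; apply/fsubsetP; apply: T_mono.

Qed.

Lemma in_h2 (C : {fset nat}) x : (x.+1 \in h2 C) = (x \in C) && (x != 0).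
Proof.
rewrite /h2 in_fset1U /= mem_imfset; last by move=> a b [].
by rewrite in_sep andbC.
Qed.

Lemma h2_inj : {in [pred C : {fset nat} | 0 \in C] &, injective h2}.
Proof.
move=> C C' H0 H0' H; apply/fsetP => -[|x]; first by rewrite (H0 : 0 \in C) (H0' : 0 \in C').
by have := in_h2 C x.+1; rewrite H in_h2 /= !andbT => <-.
Qed.

Lemma fI_T n C : C \in T n -> maxf C = n -> C = fI n.
Proof.
move=> /inT [Hs H0 Hc] Hm; apply/fsetP => x; rewrite in_fI.
apply/idP/idP; first exact: Hs.
move=> Hx; have [y [Hy H1 H2]] := Hc x Hx.
have -> : x = y by rewrite Hm subnn addn0 in H2; apply/eqP; rewrite eqn_leq H1 H2.
exact Hy.
Qed.

Lemma h2_T n C : C \in Q2 n -> h2 C \in [fset D in U n | 2 \in D].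
Proof.
rewrite in_sep => /andP [HT /andP [H1 Hne]].
have Hm1 : 1 <= maxf C by apply: maxf_ge.
have HmC := maxf_in H1.
move: (HT) => /inT [Hs H0 Hc].
have HmN : maxf C < n.
  have : maxf C <= n by apply: Hs.
  rewrite leq_eqVlt => /orP [/eqP HE|//].
  by move: Hne; rewrite (fI_T HT HE) eqxx.
have Hmax : maxf (h2 C) = (maxf C).+1.
  apply: maxf_eq; first by rewrite in_h2 HmC; lia.
  move=> [|x] //; rewrite in_h2 => /andP [Hx _]; rewrite ltnS; exact: maxf_ge.
rewrite in_sep (in_h2 C 1) H1 andbT in_sep.
have -> : (1 \in h2 C) = false by rewrite (in_h2 C 0) andbF.
rewrite andbT; apply/inT; split.
- move=> [|x] //; rewrite in_h2 => /andP [Hx _]; rewrite ltnS; exact: Hs.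
- by rewrite /h2 fset1U1.
- rewrite Hmax subSS => -[|[|x]] Hx.
  + by exists 0; rewrite /h2 fset1U1.
  + exists 0; split => //; [by rewrite /h2 fset1U1 | lia].
  + have [y [Hy Hy1 Hy2]] := Hc x.+1 Hx.
    case: y Hy Hy1 Hy2 => [|y] Hy Hy1 Hy2.
    * exists 2; split; [by rewrite in_h2 H1 | lia | lia].
    * exists y.+2; split; [by rewrite in_h2 Hy | lia | lia].
Qed.

Lemma cardU_le (K : choiceType) (A B : {fset K}) : #|` A `|` B| <= #|` A| + #|` B|.
Proof. by rewrite -cardfsUI leq_addr. Qed.

Lemma TQ n : t n <= #|` Q1 n| + #|` Q2 n| + 1.
Proof.
have H : T n `<=` (Q1 n `|` Q2 n) `|` [fset fI n].
  apply/fsubsetP => C HC; rewrite !in_fsetU in_fset1 inQ1 inQ2 HC /=.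
  by case: (1 \in C); case: (C == fI n).
apply: leq_trans (fsubset_leq_card H) _.
apply: leq_trans (cardU_le _ _) _; rewrite cardfs1 leq_add2r.
exact: cardU_le.
Qed.

Lemma Q2U n : #|` Q2 n| < #|` U n|.
Proof.
have H1 : #|` Q2 n| <= #|` [fset D in U n | 2 \in D]|.
  apply: (card_inj (f := h2)); first by move=> C; apply: h2_T.
  move=> C C' HC HC' /h2_inj; apply.
  - by move: HC; rewrite inQ2 => /andP [/inT [_ H0 _] _].
  - by move: HC'; rewrite inQ2 => /andP [/inT [_ H0 _] _].
apply: leq_ltn_trans H1 _; apply: fproper_ltn_card.
rewrite fproperEneq; apply/andP; split.
- apply/negP => /eqP HE.
  have : [fset 0] \in U n by rewrite inU T0 in_fset1.
  by rewrite -HE in_sep in_fset1 andbF.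
- by apply/fsubsetP => C; rewrite in_sep => /andP [].
Qed.

Definition E n : {fset nat} := 0 |` [fset i | i in iota 2 n.-1].

Lemma Q1U_strict n : 2 <= n -> #|` Q1 n| < #|` U n|.
Proof.
move=> Hn.
have HE : forall x, (x \in E n) = (x == 0) || (2 <= x <= n).
  move=> x; rewrite /E in_fset1U in_iotaf; congr (_ || _); congr (_ && _); lia.
have Hm : maxf (E n) = n.
  apply: maxf_eq; first by rewrite HE; apply/orP; right; lia.
  by move=> x; rewrite HE => /orP [/eqP ->|]; lia.
apply: fproper_ltn_card; rewrite fproperEneq; apply/andP; split.
- apply/negP => /eqP HQ.
  have : E n \in U n.
    rewrite inU HE /= andbT; apply/inT; split.
    + by move=> x; rewrite HE => /orP [/eqP ->|]; lia.
    + by rewrite HE.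
    + rewrite Hm => x Hx.
      case: (leqP x 1) => Hx1.
      * exists 0; split; rewrite ?HE //; lia.
      * case: (leqP x n) => Hxn.
        -- exists x; split; rewrite ?HE; lia.
        -- exists n; split; rewrite ?HE; lia.
  rewrite -HQ inQ1 => /andP [/inT [_ _ Hc] _].
  have [y [Hy H1 H2]] := Hc 1 (ltnW Hn).
  rewrite Hm subnn addn0 in H2.
  have Hy1 : y = 1 by lia.
  by move: Hy; rewrite Hy1 HE.
- apply/fsubsetP => C; rewrite inQ1 inU => /andP [HC ->]; rewrite andbT.
  by move: HC; apply/fsubsetP; apply: T_mono.
Qed.

Lemma t0 : t 0 <= 1.
Proof.
rewrite -(cardfs1 [fset 0]); apply: fsubset_leq_card; apply/fsubsetP => C /inT [Hs H0 _].
rewrite in_fset1; apply/eqP/fsetP => x; rewrite in_fset1.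
apply/idP/idP; first by move/Hs; rewrite leqn0.
by move/eqP ->.
Qed.

Lemma ratio n : 3 * t n <= 2 * t n.+1 /\ (n != 1 -> 3 * t n < 2 * t n.+1).
Proof.
have H1 := step1 n; have H2 := TQ n; have H3 := Q1U n; have H4 := Q2U n.
split; first lia.
move=> Hn1; case: n Hn1 H1 H2 H3 H4 => [|[|n]] // _ H1 H2 H3 H4.
- have := t0; lia.
- have := Q1U_strict (isT : 2 <= n.+2); lia.
Qed.

Lemma in_sumset (B D : {fset nat}) (x : nat) :
  reflect (exists b e, [/\ b \in B, e \in D & x = (b + e)%N]) (x \in sumset B D).
Proof.
apply: (iffP (imfset2P _ _ _ _ _)) => [[b Hb [e He ->]]|[b [e [Hb He ->]]]].
- by exists b, e.
- by exists b => //; exists e.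
Qed.

Lemma in_upto C x : (x \in upto C) = (x <= maxf C).
Proof. by rewrite /upto in_iotaf. Qed.

Lemma in_kplus k x : (x \in kplus k) = (1 <= x <= k).
Proof. by rewrite /kplus in_iotaf; lia. Qed.

Lemma maxf_kplus k : 1 <= k -> maxf (kplus k) = k.
Proof.
move=> Hk; apply: maxf_eq; first by rewrite in_kplus; lia.
by move=> x; rewrite in_kplus; lia.
Qed.

Definition S (C : {fset nat}) := [fset B in fpowerset (upto C) |
        has (fun D => sumset B D == C) (fpowerset (upto C))].

Lemma dS C : d C = #|` S C|. Proof. by []. Qed.

Lemma inS C B : B \in S C <->
  (forall x, x \in B -> x <= maxf C) /\ exists D, (forall x, x \in D -> x <= maxf C) /\ sumset B D = C.
Proof.
rewrite /S in_sep fpowersetE; split.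
- move=> /andP [/fsubsetP Hs /hasP [D HD /eqP HB]]; split.
  + by move=> x /Hs; rewrite in_upto.
  + exists D; split => //; move: HD; rewrite fpowersetE => /fsubsetP HD x /HD.
    by rewrite in_upto.
- move=> [Hs [D [HD HB]]]; apply/andP; split.
  + by apply/fsubsetP => x /Hs; rewrite in_upto.
  + apply/hasP; exists D; last by rewrite HB.
    by rewrite fpowersetE; apply/fsubsetP => x /HD; rewrite in_upto.
Qed.

Lemma LB k : 1 <= k -> 2 * t k.-1 <= d (kplus k).
Proof.
move=> Hk; rewrite dS.
have Hm := maxf_kplus Hk.
have HA : forall C, C \in T k.-1 -> C \in S (kplus k).
  move=> C /inT [Hs H0 Hc]; apply/inS; rewrite Hm; split.
  + by move=> x /Hs; lia.
  + have Hmc : maxf C <= k.-1 by apply: maxf_le.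
    exists [fset i | i in iota 1 (k - maxf C)]; split.
    * by move=> x; rewrite in_iotaf; lia.
    * apply/fsetP => x; rewrite in_kplus; apply/in_sumset/idP.
      -- move=> [b [e [Hb He ->]]]; move: He; rewrite in_iotaf.
         have := maxf_ge Hb; lia.
      -- move=> Hx; have [y [Hy H1 H2]] := Hc x.-1 ltac:(lia).
         exists y, (x - y); split => //; last lia.
         rewrite in_iotaf; lia.
have HB : forall C, C \in T k.-1 -> sh C \in S (kplus k).
  move=> C /inT [Hs H0 Hc]; apply/inS; rewrite Hm; split.
  + by move=> x /in_shP [y /Hs Hy ->]; lia.
  + have Hmc : maxf C <= k.-1 by apply: maxf_le.
    exists [fset i | i in iota 0 (k - maxf C)]; split.
    * by move=> x; rewrite in_iotaf; lia.
    * apply/fsetP => x; rewrite in_kplus; apply/in_sumset/idP.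
      -- move=> [b [e [Hb He ->]]]; move: He; rewrite in_iotaf.
         move: Hb => /in_shP [y Hy ->].
         have := maxf_ge Hy; lia.
      -- move=> Hx; have [y [Hy H1 H2]] := Hc x.-1 ltac:(lia).
         exists y.+1, (x - y.+1); split => //; last lia.
         ++ by rewrite in_sh.
         ++ rewrite in_iotaf; lia.
have Hd : (T k.-1) `&` (sh @` T k.-1) = fset0.
  apply/fsetP => C; rewrite in_fsetI in_fset0; apply/negP => /andP [HC /imfsetP [D HD HCD]].
  move: HC => /inT [_ HC0 _]; move: HC0; rewrite HCD; move/in_shP => [y _] //.
have Hc : #|` sh @` T k.-1| = t k.-1.
  apply/eqP/card_in_imfsetP => x y _ _ Hxy; apply/fsetP => z.
  by rewrite -[z \in x]in_sh -[z \in y]in_sh Hxy.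
have := cardfsUI (T k.-1) (sh @` T k.-1); rewrite Hd cardfs0 addn0 Hc -/(t _) => HU.
rewrite mul2n -addnn -HU; apply: fsubset_leq_card; apply/fsubsetP => C.
rewrite in_fsetU => /orP [/HA //|/imfsetP [D HD ->]]; exact: HB.
Qed.

Lemma ub (K : choiceType) (n c : nat) (P : nat -> K -> bool) (X : {fset K}) :
  (forall m, m < n -> #|` [fset B in X | P m B]| <= c) ->
  (forall B, B \in X -> exists2 m, m < n & P m B) -> #|` X| <= n * c.
Proof.
elim: n X => [|n IH] X Hc Hm.
- rewrite mul0n leqn0 cardfs_eq0; apply/eqP/fsetP => B; rewrite in_fset0.
  by apply/negP => /Hm [m].
- have HX : X `<=` [fset B in X | P n B] `|` [fset B in X | ~~ P n B].
    by apply/fsubsetP => B HB; rewrite in_fsetU !in_sep HB /=; case: (P n B).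
  apply: leq_trans (fsubset_leq_card HX) _.
  apply: leq_trans (cardU_le _ _) _; rewrite mulSn leq_add //; first exact: Hc.
  apply: IH.
  + move=> m Hmn; apply: leq_trans (Hc m (ltnW Hmn)); apply: fsubset_leq_card.
    by apply/fsubsetP => B; rewrite !in_sep => /andP [/andP [-> _] ->].
  + move=> B; rewrite in_sep => /andP [HB HnB]; have [m Hm1 Hm2] := Hm B HB.
    exists m => //; move: Hm1; rewrite ltnS leq_eqVlt => /orP [/eqP Hmn|//].
    by move: HnB; rewrite -Hmn Hm2.
Qed.

Section UB.
Variables (k a : nat) (A : {fset nat}).
Hypothesis HAk : forall x, x \in A -> 1 <= x <= k.
Hypothesis Ha : a \in A.
Hypothesis Hamin : forall x, x \in A -> a <= x.

Definition Tp := [fset C in T (k - a) | (maxf C + a)%N \in A].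
Definition fib m := [fset B in S A | (m \in B) && all (fun x => m <= x) B].
Definition Phi m (B : {fset nat}) : {fset nat} :=
  [fset (x - m)%N | x in B] `|` [fset x in fI (maxf B - m) | (x + a)%N \notin A].

Lemma fib_facts m B : B \in fib m -> exists D,
  [/\ sumset B D = A, m \in B, (forall x, x \in B -> m <= x), m <= a & (a - m) \in D].
Proof.
rewrite in_sep => /andP [/inS [_ [D [_ HD]]] /andP [Hm /allP Hall]].
have HBD : forall x e, x \in B -> e \in D -> (x + e)%N \in A.
  by move=> x e Hx He; rewrite -HD; apply/in_sumset; exists x, e.
have : a \in sumset B D by rewrite HD.
move/in_sumset => [b [e [Hb He Hae]]].
have Hmb := Hall b Hb.
have Hme := Hamin (HBD m e Hm He).
have Hbm : b = m by lia.
exists D; split => //; first lia.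
by have -> : (a - m)%N = e by lia.
Qed.

Lemma Phi_in m B : B \in fib m -> Phi m B \in Tp.
Proof.
move=> HB; have [D [HD Hm Hall Hma Hamd]] := fib_facts HB.
have HBD : forall x e, x \in B -> e \in D -> (x + e)%N \in A.
  by move=> x e Hx He; rewrite -HD; apply/in_sumset; exists x, e.
have HDa : forall e, e \in D -> a <= m + e by move=> e He; apply: Hamin; apply: HBD.
have Hb := maxf_in Hm.
set b := maxf B in Hb *.
have Hbk : b + (a - m) <= k by have /HAk := HBD _ _ Hb Hamd; lia.
have Hxb : forall x, x \in B -> m <= x <= b by move=> x Hx; rewrite Hall // maxf_ge.
have HPhi : forall y, y \in Phi m B ->
   (exists2 x, x \in B & y = x - m) \/ (y <= b - m /\ (y + a)%N \notin A).
  move=> y; rewrite in_fsetU in_sep in_fI => /orP [/imfsetP [x Hx ->]|/andP [H1 H2]].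
  + by left; exists x.
  + by right.
have Hmax : maxf (Phi m B) = b - m.
  apply: maxf_eq; first by rewrite in_fsetU; apply/orP; left; apply/imfsetP; exists b.
  move=> y /HPhi [[x Hx ->]|[]//]; have := Hxb x Hx; lia.
rewrite in_sep Hmax; apply/andP; split; last first.
  have Hmb := Hxb _ Hb. have E : (b - m + a = b + (a - m))%N by lia. rewrite E. exact: HBD.
apply/inT; split.
- move=> y /HPhi [[x Hx ->]|[H1 _]]; last lia.
  have /HAk := HBD _ _ Hx Hamd; have := Hxb x Hx; lia.
- rewrite in_fsetU; apply/orP; left; apply/imfsetP; exists m => //; lia.
- rewrite Hmax => x Hx.
  case: (leqP x (b - m)) => Hxb'; last first.
    exists (b - m); split; last lia; last lia.
    by rewrite in_fsetU; apply/orP; left; apply/imfsetP; exists b.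
  case HxA : ((x + a)%N \in A).
  + move: HxA; rewrite -HD => /in_sumset [y [e [Hy He Hxy]]].
    have := HDa e He; have := Hxb y Hy; have /HAk := HBD _ _ Hb He => HH1 HH2 HH3.
    exists (y - m); split; last lia; last lia.
    by rewrite in_fsetU; apply/orP; left; apply/imfsetP; exists y.
  + exists x; split => //; last lia.
    by rewrite in_fsetU in_sep in_fI HxA Hxb' orbT.
Qed.

Lemma Phi_mem m B x : B \in fib m ->
  (x \in B) = [&& m <= x, (x - m) \in Phi m B & (x - m + a)%N \in A].
Proof.
move=> HB; have [D [HD Hm Hall Hma Hamd]] := fib_facts HB.
have HBD : forall x e, x \in B -> e \in D -> (x + e)%N \in A.
  by move=> x' e Hx He; rewrite -HD; apply/in_sumset; exists x', e.
apply/idP/idP.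
- move=> Hx; have Hmx := Hall x Hx; rewrite Hmx /=; apply/andP; split.
  + by rewrite in_fsetU; apply/orP; left; apply/imfsetP; exists x.
  + by have := HBD _ _ Hx Hamd; have -> : (x - m + a = x + (a - m))%N by lia.
- move=> /and3P [Hmx]; rewrite in_fsetU in_sep => /orP [/imfsetP [z Hz Hzx]|/andP [H1 H2]] HA.
  + have Hmz := Hall z Hz; have -> : x = z by lia. exact: Hz.
  + by rewrite HA in H2.
Qed.

Lemma fib_card m : #|` fib m| <= #|` Tp|.
Proof.
apply: (card_inj (f := Phi m)); first by move=> B; apply: Phi_in.
move=> B B' HB HB' HE; apply/fsetP => x.
by rewrite (Phi_mem x HB) (Phi_mem x HB') HE.
Qed.

Lemma UB : (d A <= a.+1 * #|` Tp|)%N.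
Proof.
rewrite dS; apply: (@ub _ a.+1 #|` Tp| (fun m (B : {fset nat}) => (m \in B) && all (fun x => m <= x) B) (S A)).
- by move=> m _; apply: fib_card.
- move=> B HB.
  have [HBs [D [_ HD]]] := (inS A B).1 HB.
  have : a \in sumset B D by rewrite HD.
  move/in_sumset => [b [e [Hb He Hae]]].
  have Hex : exists x, x \in B by exists b.
  case: (ex_minnP Hex) => m Hm Hmin.
  exists m; last first.
    by rewrite Hm /=; apply/allP => x; apply: Hmin.
  have := Hmin _ Hb; lia.
Qed.
End UB.

Lemma t_pos n : 0 < t n.
Proof. by rewrite /t cardfs_gt0; apply/fset0Pn; exists [fset 0]; apply: T0. Qed.

Lemma growth j n : 1 <= j ->
  (j + 2) * t n <= 2 * t (n + j) /\ ((2 <= j) || (n != 1) -> (j + 2) * t n < 2 * t (n + j)).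
Proof.
elim: j => [//|j IH] _.
have Hp := t_pos n.
case: (posnP j) => [|Hj0].
- move=> Hj; subst j; have [H1 H2] := ratio n; rewrite addn1; split; first exact: H1.
  by move=> H; apply: H2; move: H; rewrite ltnn.
- have [IH1 _] := IH Hj0.
  have [R1 _] := ratio (n + j).
  have E : (n + j.+1 = (n + j).+1)%N by lia. rewrite E.
  have HH : (j.+1 + 2) * t n < 2 * t (n + j).+1 by nia.
  split => [|_]; exact: ltnW || exact: HH.
Qed.

Lemma fI_T' j N : j <= N -> fI j \in T N /\ maxf (fI j) = j.
Proof.
move=> HjN.
have Hm : maxf (fI j) = j.
  by apply: maxf_eq; [rewrite in_fI | move=> x; rewrite in_fI].
split => //; apply/inT; split.
- by move=> x; rewrite in_fI; lia.
- by rewrite in_fI.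
- rewrite Hm => x Hx; case: (leqP x j) => Hxj.
  + by exists x; split; rewrite ?in_fI //; lia.
  + by exists j; split; rewrite ?in_fI //; lia.
Qed.

Unset Implicit Arguments.
Theorem mainTheorem9 (k : nat) (A : {fset nat}) :
  (1 <= k)%N -> A != fset0 -> A `<` kplus k ->
  (d A <= d (kplus k))%N /\ (k != 3 -> (d A < d (kplus k))%N).
Proof.
move=> Hk /fset0Pn HA0 Hprop.
have HAk : forall x, x \in A -> 1 <= x <= k.
  by move=> x Hx; rewrite -in_kplus; apply: (fsubsetP (fproper_sub Hprop)).
case: (ex_minnP HA0) => a Ha Hamin.
have Hak : 1 <= a <= k by apply: HAk.
have HUB := UB HAk Ha Hamin.
have HLB := LB Hk.
have HTp : #|` Tp k a A| <= t (k - a).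
  by apply: fsubset_leq_card; apply/fsubsetP => C; rewrite in_sep => /andP [].
case: (ltnP 1 a) => Ha1.
- have Ha1' : 0 < a.-1 by lia.
  have [G1 G2] := growth (k - a) Ha1'.
  have E : (k - a + a.-1 = k.-1)%N by lia.
  have E2 : (a.-1 + 2 = a.+1)%N by lia.
  rewrite E E2 in G1 G2.
  have HM : a.+1 * #|` Tp k a A| <= a.+1 * t (k - a) by rewrite leq_mul2l HTp orbT.
  split; first lia.
  move=> Hk3.
  have Hor : (2 <= a.-1) || (k - a != 1) by lia.
  have := G2 Hor; lia.
- have Ha1' : a = 1 by lia.
  subst a.
  have : ~~ (kplus k `<=` A) by move: Hprop; rewrite fproperE => /andP [].
  case/fsubsetPn => h Hh HhA.
  have Hh2 : 2 <= h <= k.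
    move: Hh; rewrite in_kplus => /andP [H1 H2]; rewrite H2 andbT.
    case: h HhA H1 {H2} => [|[|h]] //. by rewrite Ha.
  have Hhk : h.-1 <= k - 1 by lia.
  have [HC HCm] := fI_T' Hhk.
  have HTp' : #|` Tp k 1 A| < t (k - 1).
    apply: fproper_ltn_card; rewrite fproperEneq; apply/andP; split.
    + apply/negP => /eqP HE.
      move: HC; rewrite -HE in_sep HCm => /andP [_].
      have -> : (h.-1 + 1 = h)%N by lia.
      by rewrite (negbTE HhA).
    + by apply/fsubsetP => C; rewrite in_sep => /andP [].
  have E : (k - 1 = k.-1)%N by lia.
  rewrite E in HTp'.
  split; lia.
Qed.
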